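(* Let $k$ be a field of characteristic $p>0$ and $A$ an infinite-dimensional $k$-vector space. For every $r\ge0$, $S_{\le r}A\neq\bigoplus_{0\le i\le r}S^iA$.
   Context: $SA=\bigoplus_{m\ge0}S^mA$ is the symmetric algebra of $A$ ($S^0A=k$, $S^mA$ the $m$-th symmetric power, with pure symmetric tensors $a_1\otimes_s\dots\otimes_s a_m$). The linear map $\partial\colon SA\to SA\otimes A$ is given by $\partial(\lambda)=0$ for $\lambda\in S^0A$ and $\partial(a_1\otimes_s\dots\otimes_s a_m)=\sum_{i=1}^m(a_1\otimes_s\dots\otimes_s a_{i-1}\otimes_s a_{i+1}\otimes_s\dots\otimes_s a_m)\otimes a_i$. Iterates: $\partial^0=1_{SA}$ and $\partial^{r+1}:=\partial;(\partial^r\otimes 1_A)\colon SA\to SA\otimes A^{\otimes(r+1)}$. Define $S_{\le r}A:=\ker(\partial^{r+1})\subseteq SA$. *)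

(* Defs.v *)
From HB Require Import structures.
From mathcomp Require Import all_boot all_order all_algebra.
From mathcomp Require Import finmap.
From mathcomp.multinomials Require Import monalg.

Set Implicit Arguments.
Unset Strict Implicit.
Unset Printing Implicit Defensive.

Import GRing.Theory.
Local Open Scope ring_scope.

(* The k-vector space A is modelled as the free k-vector space on a basis
   I (every vector space has a basis); A is infinite-dimensional iff I is
   infinite.  Then:
   - S^m A has basis the commutative monomials of degree m in the basis
     vectors x_i (i : I), so  SA = {malg k[{cmonom I}]}  (polynomial ring);
   - SA (x) A^{(x) n} has basis (monomial, n-tuple of basis indices), so
     SA (x) A^{(x) n} = {malg k[{cmonom I} * n.-tuple I]}.                *)

Section SymAlg.
Variables (k : fieldType) (I : choiceType).

Definition SA := {malg k[{cmonom I}]}.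
Definition SAT (n : nat) := {malg k[({cmonom I} * n.-tuple I)%type]}.

Definition mon_of_seq (s : seq I) : {cmonom I} :=
  \big[mmul/mone]_(i <- s) ucm i.

Definition seq_of_mon (m : {cmonom I}) : seq I :=
  flatten [seq nseq (m i) i | i <- finsupp m].

(* paper's formula for d on a pure tensor a_1 (x)_s ... (x)_s a_m (a_j = x_{s_j}):
   sum_j (a_1 ... a_{j-1} a_{j+1} ... a_m) (x) a_j *)
Definition dpure (s : seq I) : SAT 1 :=
  \sum_(j < size s)
     << (mon_of_seq (take j s ++ drop j.+1 s), [tuple tnth (in_tuple s) j]) >>.

Definition dS (f : SA) : SAT 1 :=
  \sum_(m <- msupp f) f@_m *: dpure (seq_of_mon m).

Definition tens_right n (g : SAT n) (i : I) : SAT n.+1 :=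
  \sum_(kt <- msupp g) << g@_kt *g (kt.1, [tuple of rcons kt.2 i]) >>.

(* F (x) 1_A : SA (x) A -> SA (x) A^{(x) n+1}, for a map F : SA -> SA (x) A^{(x) n} *)
Definition tens_id n (F : SA -> SAT n) (g : SAT 1) : SAT n.+1 :=
  \sum_(kt <- msupp g) g@_kt *: tens_right (F << kt.1 >>) (thead kt.2).

(* iterates: d^0 = 1_SA (under SA = SA (x) A^{(x)0}),  d^{r+1} = d ; (d^r (x) 1_A) *)
Fixpoint dpow (n : nat) : SA -> SAT n :=
  match n with
  | 0 => fun f => \sum_(m <- msupp f) << f@_m *g (m, [tuple]) >>
  | r.+1 => fun f => tens_id (dpow r) (dS f)
  end.

Definition S_le (r : nat) : pred SA := fun f => dpow r.+1 f == 0.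

Definition S_sum_le (r : nat) : pred SA :=
  fun f => all (fun m => mdeg m <= r)%N (msupp f).

End SymAlg.

(* Main.v *)
Require Import Defs.
From HB Require Import structures.
From mathcomp Require Import all_boot all_order all_algebra.
From mathcomp Require Import finmap.
From mathcomp.multinomials Require Import monalg.
From mathcomp Require Import zify.
Import GRing.Theory.
Local Open Scope ring_scope.

Section H.
Variables (k : fieldType) (I : choiceType).

Lemma mon_nseqE (i j : I) n : (mon_of_seq (nseq n i)) j = ((i == j) * n)%N.
Proof.
elim: n => [|n IH]; rewrite /mon_of_seq /=.
  by rewrite big_nil cm1 muln0.
rewrite big_cons cmM cmU -/(mon_of_seq _) IH; case: (i == j) => //.
Qed.

Lemma mdeg_nseq (i : I) n : mdeg (mon_of_seq (nseq n i)) = n.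
Proof.
elim: n => [|n IH]; rewrite /mon_of_seq /=.
  by rewrite big_nil mdeg1.
by rewrite big_cons mdegM mdegU -/(mon_of_seq _) IH.
Qed.

Lemma seq_of_mon_nseq (i : I) n : seq_of_mon (mon_of_seq (nseq n i)) = nseq n i.
Proof.
set m := mon_of_seq _.
have Hall : all (pred1 i) (seq_of_mon m).
  apply/allP => x /flattenP [s /mapP [j Hj Hs]]; rewrite Hs => /nseqP [Hx _]; rewrite /= Hx.
  move: Hj; rewrite -cmE_neq0 /m mon_nseqE.
  by rewrite [j == i]eq_sym; case: (i == j); rewrite ?mul0n ?eqxx.
move/all_pred1P: Hall ->; congr nseq.
rewrite /seq_of_mon size_flatten /shape -map_comp.
rewrite -(mdeg_nseq i n) -/m mdegE sumnE big_map.
by apply: eq_bigr => j _ /=; rewrite size_nseq.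
Qed.

Lemma dpure_nseq (i : I) n : @dpure k I (nseq n i) =
  << (mon_of_seq (nseq n.-1 i), [tuple i]) >> *+ n :> SAT k I 1.
Proof.
rewrite /dpure.
rewrite (eq_bigr (fun _ => << (mon_of_seq (nseq n.-1 i), [tuple i]) >>)).
  by rewrite sumr_const card_ord size_nseq.
move=> j _; have Hj : (j < n)%N by move: (nat_of_ord j) (ltn_ord j) => jj; rewrite size_nseq.
congr (<< (_, _) >>).
  rewrite take_nseq ?(ltnW Hj) // drop_nseq -nseqD.
  congr (mon_of_seq (nseq _ _)); lia.
apply: val_inj => /=; rewrite (tnth_nth i) /= nth_nseq Hj //.
Qed.

End H.

Theorem proposition7p9 (k : fieldType) (p : nat) (hp : (p \in [pchar k])%R)
    (I : choiceType) (infI : forall s : seq I, exists i : I, i \notin s)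
    (r : nat) :
  ~ (@S_le k I r =i @S_sum_le k I r).
Proof.
move=> H.
have [i _] := infI [::].
have p1 : (1 < p)%N by apply: prime_gt1; exact: pcharf_prime hp.
set n := (p ^ r.+1)%N.
set m := mon_of_seq (nseq n i).
set f : SA k I := << m >>.
have Hd : dS f = 0.
  rewrite /dS /f msuppU1 big_seq_fset1 /m seq_of_mon_nseq dpure_nseq.
  by rewrite -scaler_nat /n natrX (pcharf0 hp) expr0n /= !scale0r scaler0.
have HS : f \in S_le r by rewrite unfold_in; rewrite /S_le /= Hd /tens_id msupp0 big_seq_fset0.
move: HS; rewrite H unfold_in /S_sum_le /f msuppU1 => /allP /(_ m).
rewrite inE eqxx /m mdeg_nseq => /(_ isT).
by rewrite leqNgt /n (ltnW (ltn_expl _ p1)).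
Qed.
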